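(* Let $G$ be a simple graph with $m$ edges and $W$ wedges, and let $\mathcal{S}$ be a fixed nonempty subset of the wedges of $G$. Let $\mathcal{R}=(r_1,\dots,r_s)$ be $s\ge 2$ independent uniformly random edges of $G$, and let $X$ be the number of index pairs $i<j$ such that $\{r_i,r_j\}\in\mathcal{S}$. (1) $\mathbf{E}[X] = \binom{s}{2}\cdot \frac{2|\mathcal{S}|}{m^2}$. (2) There is an absolute constant $c'$ such that for every $\gamma\in(0,1)$: if $W\ge m$ and $s \ge c' m/(\gamma^3\sqrt{W})$, then with probability at least $1-\gamma$, $|X-\mathbf{E}[X]| \le (\gamma W/|\mathcal{S}|)\,\mathbf{E}[X]$.
   Context: A wedge is a path of length 2 in $G$, i.e. an unordered pair of distinct edges sharing exactly one vertex; $W$ denotes the total number of wedges of $G$. *)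

(* Defs.v *)
From HB Require Import structures.
From mathcomp Require Import all_boot all_order all_algebra.
Set Implicit Arguments. Unset Strict Implicit. Unset Printing Implicit Defensive.
Import Order.TTheory GRing.Theory Num.Theory.

Section GraphDefs.
Variables (V : finType) (e : rel V).

Definition edges : {set {set V}} :=
  [set A : {set V} | [exists x, exists y, e x y && (A == [set x; y])]].

Definition wedges : {set {set {set V}}} :=
  [set P : {set {set V}} | [exists A, exists B,
     [&& A \in edges, B \in edges, A != B, #|A :&: B| == 1 & P == [set A; B]]]].

(* Sample space of s independent uniform edges: all s-tuples of edges
   (uniform measure on this finite set). *)
Definition sample_space (s : nat) : {set {ffun 'I_s -> {set V}}} :=
  [set r : {ffun 'I_s -> {set V}} | [forall i, r i \in edges]].

Definition Xcount (S : {set {set {set V}}}) (s : nat)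
    (r : {ffun 'I_s -> {set V}}) : nat :=
  #|[set p : 'I_s * 'I_s | (p.1 < p.2)%N && ([set r p.1; r p.2] \in S)]|.

Definition expectX (R : numFieldType) (S : {set {set {set V}}}) (s : nat) : R :=
  ((\sum_(r in sample_space s) (Xcount S r)%:R) / (#|sample_space s|)%:R)%R.

Definition probX (R : numFieldType) (s : nat)
    (P : {ffun 'I_s -> {set V}} -> bool) : R :=
  ((#|[set r in sample_space s | P r]|)%:R / (#|sample_space s|)%:R)%R.

End GraphDefs.

(* Main.v *)
Require Import Defs.
From HB Require Import structures.
From mathcomp Require Import all_boot all_order all_algebra zify ring lra.
Import Order.TTheory GRing.Theory Num.Theory.
Set Implicit Arguments. Unset Strict Implicit. Unset Printing Implicit Defensive.

Lemma set2_eqE (T : finType) (a b A B : T) : A != B -> [set a; b] = [set A; B] ->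
  ((a == A) && (b == B)) || ((a == B) && (b == A)).
Proof.
move=> nAB hP.
have ha : a \in [set A; B] by rewrite -hP set21.
have hb : b \in [set A; B] by rewrite -hP set22.
have hA : A \in [set a; b] by rewrite hP set21.
have hB : B \in [set a; b] by rewrite hP set22.
move: ha hb hA hB nAB; rewrite !inE.
case/orP=> /eqP-> ; case/orP=> /eqP->; rewrite ?eqxx ?orbT ?orbb //=.
  by move=> _ /eqP ->; rewrite eqxx.
by move=> /eqP -> _; rewrite eqxx.
Qed.

Section Graph.
Variables (V : finType) (e : rel V).
Variable (eirr : irreflexive e).

Lemma edge_card2 A : A \in edges e -> #|A| = 2.
Proof.
rewrite inE => /existsP[x /existsP[y /andP[exy /eqP->]]].
rewrite cards2; have -> // : x != y.
by apply: contraTneq exy => ->; rewrite eirr.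
Qed.

Lemma wedge_pairP a b : [set a; b] \in wedges e ->
  [/\ a \in edges e, b \in edges e, a != b & #|a :&: b| == 1].
Proof.
rewrite inE => /existsP[A /existsP[B /and5P[hA hB hAB h1 /eqP hP]]].
case/orP: (set2_eqE hAB hP) => /andP[/eqP-> /eqP->] //.
by rewrite setIC eq_sym.
Qed.

Lemma wedgeP P : P \in wedges e -> exists A B, A != B /\ P = [set A; B].
Proof.
rewrite inE => /existsP[A /existsP[B /and5P[hA hB hAB h1 /eqP hP]]].
by exists A, B.
Qed.
End Graph.

Section Wedges.
Variables (V : finType) (e : rel V) (S : {set {set {set V}}}).
Variables (eirr : irreflexive e) (SW : S \subset wedges e).

Definition Q (a b : {set V}) := [set a; b] \in S.

Lemma Q_sym a b : Q a b = Q b a.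
Proof. by rewrite /Q setUC. Qed.

Lemma Q_wedge a b : Q a b ->
  [/\ a \in edges e, b \in edges e, a != b & #|a :&: b| == 1].
Proof. by move=> h; apply: wedge_pairP; apply: (subsetP SW). Qed.

Lemma Q_diag a : Q a a = false.
Proof. by apply/negP => /Q_wedge[_ _]; rewrite eqxx. Qed.

Lemma Q_E1 a b : Q a b -> a \in edges e.
Proof. by case/Q_wedge. Qed.
Lemma Q_E2 a b : Q a b -> b \in edges e.
Proof. by case/Q_wedge. Qed.

Lemma K_card : \sum_a \sum_b (Q a b : nat) = 2 * #|S|.
Proof.
rewrite pair_bigA /=.
rewrite (eq_bigr (fun p => if Q p.1 p.2 then 1 else 0)); last by move=> p _; case: (Q _ _).
rewrite -big_mkcond /=.
rewrite (partition_big (fun p => [set p.1; p.2]) (mem S)) //=.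
rewrite mulnC -sum_nat_const; apply: eq_bigr => P PS.
have [A [B [nAB hP]]] := wedgeP (subsetP SW _ PS); subst P.
rewrite (eq_bigl (fun p => p \in [set (A, B); (B, A)])); last first.
  move=> [a b] /=; rewrite !inE.
  apply/andP/idP.
    move=> [_ /eqP h]; case/orP: (set2_eqE nAB h) => /andP[/eqP-> /eqP->];
    by rewrite eqxx ?orbT.
  by case/orP=> /eqP[-> ->]; split => //; rewrite /Q // setUC.
rewrite sum1_card cards2; case: eqP => // -[h _]; by rewrite h eqxx in nAB.
Qed.
End Wedges.

Section Degree.
Variables (V : finType) (e : rel V) (S : {set {set {set V}}}).
Variables (eirr : irreflexive e) (SW : S \subset wedges e).

Definition Bz (a : {set V}) (z : V) := [set b in edges e | (z \in b) && (b != a)].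

Lemma BzE a z b : (b \in Bz a z) = [&& b \in edges e, z \in b & b != a].
Proof. by rewrite /Bz in_set. Qed.

Lemma inter1 b b' z : b \in edges e -> b' \in edges e -> b != b' ->
  z \in b -> z \in b' -> #|b :&: b'| == 1.
Proof.
move=> hb hb' nbb zb zb'.
rewrite eqn_leq; apply/andP; split; last first.
  by rewrite card_gt0; apply/set0Pn; exists z; rewrite inE zb.
rewrite leqNgt; apply/negP => h2.
have c2 : #|b :&: b'| = 2.
  apply/eqP; rewrite eqn_leq h2 andbT -(edge_card2 eirr hb).
  exact: subset_leq_card (subsetIl _ _).
have E1 : b :&: b' = b.
  have [_] := subset_leqif_cards (subsetIl b b').
  by rewrite c2 (edge_card2 eirr hb) eqxx => /esym/eqP.
have E2 : b :&: b' = b'.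
  have [_] := subset_leqif_cards (subsetIr b b').
  by rewrite c2 (edge_card2 eirr hb') eqxx => /esym/eqP.
by move: nbb; rewrite -{1}E1 E2 eqxx.
Qed.

Lemma Bz_bin a z : 'C(#|Bz a z|, 2) <= #|wedges e|.
Proof.
rewrite -cards_draws; apply: subset_leq_card; apply/subsetP => P.
rewrite inE => /andP[sub /cards2P[b [b' [nbb hP]]]]; subst P.
have hb : b \in Bz a z by apply: (subsetP sub); rewrite set21.
have hb' : b' \in Bz a z by apply: (subsetP sub); rewrite set22.
move: hb hb'; rewrite [b \in _]inE [b' \in _]inE => /and3P[Eb zb _] /and3P[Eb' zb' _].
rewrite /wedges in_set; apply/existsP; exists b; apply/existsP; exists b'.
by rewrite Eb Eb' nbb (inter1 Eb Eb' nbb zb zb') eqxx.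
Qed.

Lemma sq_bin x W : 'C(x, 2) <= W -> 0 < W -> x * x <= 4 * W.
Proof.
move=> h W0; have := mul_bin_left x 1; rewrite bin1 subn1 => h2.
case: (leqP x 1) => hx; first by nia.
have : x * x <= 2 * (x * x.-1) by nia.
nia.
Qed.

Definition deg a := \sum_b (Q S a b : nat).

Lemma deg_bound a : 0 < #|wedges e| -> deg a * deg a <= 16 * #|wedges e|.
Proof.
move=> W0.
have -> : deg a = #|[set b | Q S a b]|.
  rewrite /deg -sum1dep_card (big_mkcond (fun b => Q S a b)) /=.
  by apply: eq_bigr => b _; case: (Q S a b).
case: (boolP (a \in edges e)) => aE; last first.
  rewrite (_ : [set b | Q S a b] = set0) ?cards0 //.
  apply/setP => b; rewrite !inE; apply/negP => /(Q_E1 SW); exact/negP.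
move: (aE); rewrite inE => /existsP[x /existsP[y /andP[exy /eqP ha]]].
have sub : [set b | Q S a b] \subset Bz a x :|: Bz a y.
  apply/subsetP => b; rewrite inE => /(Q_wedge SW)[_ bE nab c1].
  have [z] : exists z, z \in a :&: b.
    by apply/set0Pn; rewrite -card_gt0 (eqP c1).
  rewrite inE => /andP[za zb].
  rewrite in_setU !BzE bE eq_sym nab /= !andbT.
  by move: za; rewrite ha !inE => /orP[] /eqP <-; rewrite ?zb ?orbT.
have := subset_leq_card sub; have [h _] := leq_card_setU (Bz a x) (Bz a y).
have := sq_bin (Bz_bin a x) W0; have := sq_bin (Bz_bin a y) W0.
set u := #|Bz a x|; set v := #|Bz a y|; set d := #|[set b | Q S a b]|.
move=> h1 h2 h3; have h4 := leq_trans h3 h.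
have h5 : d * d <= (u + v) * (u + v) by apply: leq_mul.
have h6 : (u + v) * (u + v) <= 2 * (u * u + v * v).
  clear; case: (leqP u v) => [/subnK <- | /ltnW /subnK <-]; nia.
lia.
Qed.
End Degree.

Section T.
Variables (s : nat) (T : finType) (F : 'I_s -> pred T).
Lemma cnt : #|[set r : {ffun 'I_s -> T} | [forall k, F k (r k)]]| = \prod_k #|F k|.
Proof.
have := card_family F; rewrite foldrE big_map big_enum => <-.
apply: eq_card => r; rewrite inE.
apply/forallP/familyP => H k; exact: H.
Qed.
End T.

Section Space.
Variables (R : numFieldType) (V : finType) (e : rel V) (s : nat).
Local Open Scope ring_scope.

Notation Om := (sample_space e s).
Notation m := #|edges e|.

Definition opt_ok (o : option {set V}) x := if o is Some a then x == a else true.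
Definition upd (P : 'I_s -> option {set V}) i a :=
  fun k => if k == i then Some a else P k.
Definition P0 : 'I_s -> option {set V} := fun _ => None.

Lemma count_fix (P : 'I_s -> option {set V}) :
  (forall k a, P k = Some a -> a \in edges e) ->
  #|[set r in Om | [forall k, opt_ok (P k) (r k)]]| = (m ^ #|[set k | P k == None]|)%N.
Proof.
move=> hP.
rewrite (_ : [set r in Om | _] = [set r : {ffun _} | [forall k,
   (fun k x => (x \in edges e) && opt_ok (P k) x) k (r k)]]); last first.
  apply/setP => r; rewrite !inE; apply/andP/forallP.
    by move=> [/forallP h1 /forallP h2] k; rewrite h1 h2.
  by move=> h; split; apply/forallP => k; case/andP: (h k).
rewrite (cnt (fun k x => (x \in edges e) && opt_ok (P k) x)) (eq_bigr (fun k => if P k == None then m else 1%N)); last first.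
  move=> k _; case hk: (P k) => [a|] /=.
    rewrite -(card1 a); apply: eq_card => x; change ((x \in edges e) && (x == a) = (x == a)).
    by case: eqP => [->|]; rewrite ?andbT ?andbF ?(hP _ _ hk).
  by apply: eq_card => x; change ((x \in edges e) && true = (x \in edges e)); rewrite andbT.
rewrite -(prod_nat_const (mem [set k | P k == None])) big_mkcond.
rewrite [RHS]big_mkcond; by apply: eq_bigr => k _; rewrite inE.
Qed.

Lemma upd_forall P i a r : P i = None ->
  [forall k, opt_ok (upd P i a k) (r k)] = (r i == a) && [forall k, opt_ok (P k) (r k)].
Proof.
move=> Pi; apply/forallP/andP.
  move=> H; split; first by have := H i; rewrite /upd eqxx.
  apply/forallP => k; have := H k; rewrite /upd; case: eqP => [->|] //; by rewrite Pi.
move=> [/eqP ri /forallP H] k; rewrite /upd; case: eqP => [->|_]; last exact: H.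
by rewrite /= ri.
Qed.

Lemma P0_forall r : [forall k, opt_ok (P0 k) (r k)].
Proof. by apply/forallP. Qed.

Lemma upd_None P i a : [set k | upd P i a k == None] = [set k | P k == None] :\ i.
Proof. by apply/setP => k; rewrite !inE /upd; case: (k =P i). Qed.

Lemma upd_ok P i a : (forall k b, P k = Some b -> b \in edges e) -> a \in edges e ->
  (forall k b, upd P i a k = Some b -> b \in edges e).
Proof. by move=> h ha k b; rewrite /upd; case: eqP => _ ; [case=> <-|exact: h]. Qed.

Lemma sum_fix P (c : R) : (forall k a, P k = Some a -> a \in edges e) ->
  \sum_(r in Om) (if [forall k, opt_ok (P k) (r k)] then c else 0)
  = c *+ (m ^ #|[set k | P k == None]|)%N.
Proof.
move=> hP; rewrite -big_mkcondr -(count_fix hP) -sumr_const.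
by apply: eq_bigl => r; rewrite !inE.
Qed.

Lemma Om_E r k : r \in Om -> r k \in edges e.
Proof. by rewrite inE => /forallP. Qed.

Lemma expand1 (F : {set V} -> R) x : x \in edges e ->
  F x = \sum_(a in edges e) (if x == a then F a else 0).
Proof.
move=> xE; rewrite (bigD1 x) //= eqxx big1 ?addr0 // => a /andP[_ /negbTE].
by rewrite eq_sym => ->.
Qed.

Lemma card_Om : #|Om| = (m ^ s)%N.
Proof.
have hP0 : forall k a, P0 k = Some a -> a \in edges e by [].
have := count_fix hP0.
rewrite (_ : [set k | P0 k == None] = setT); last by apply/setP => k; rewrite !inE.
rewrite cardsT card_ord => <-; apply: eq_card => r; rewrite !inE P0_forall andbT //.
Qed.

Lemma sum_step P i (H : {ffun 'I_s -> {set V}} -> R) : P i = None ->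
  \sum_(r in Om) (if [forall k, opt_ok (P k) (r k)] then H r else 0) =
  \sum_(a in edges e) \sum_(r in Om)
     (if [forall k, opt_ok (upd P i a k) (r k)] then H r else 0).
Proof.
move=> Pi; rewrite exchange_big /=; apply: eq_bigr => r rO.
rewrite (expand1 (fun a => if [forall k, opt_ok (P k) (r k)] then H r else 0) (Om_E i rO)).
apply: eq_bigr => a _; rewrite upd_forall //.
by case: (r i == a); case: [forall k, opt_ok (P k) (r k)].
Qed.

Lemma cond_val P (r : {ffun 'I_s -> {set V}}) k a : P k = Some a -> [forall k0, opt_ok (P k0) (r k0)] -> r k = a.
Proof. by move=> Pk /forallP /(_ k); rewrite Pk => /eqP. Qed.

Lemma None_P0 : [set k | P0 k == None] = setT.
Proof. by apply/setP => k; rewrite !inE. Qed.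

Lemma updE P i a k : upd P i a k = if k == i then Some a else P k.
Proof. by []. Qed.

Lemma sum2 i j (G : {set V} -> {set V} -> R) : i != j ->
  \sum_(r in Om) G (r i) (r j) =
  (m ^ #|[set: 'I_s] :\ i :\ j|)%:R *
    \sum_(a in edges e) \sum_(b in edges e) G a b.
Proof.
move=> ij.
transitivity (\sum_(r in Om) (if [forall k, opt_ok (P0 k) (r k)] then G (r i) (r j) else 0)).
  by apply: eq_bigr => r _; rewrite P0_forall.
rewrite (@sum_step P0 i (fun r => G (r i) (r j))) // mulr_sumr; apply: eq_bigr => a aE.
rewrite (@sum_step (upd P0 i a) j (fun r => G (r i) (r j))); last by rewrite updE eq_sym (negbTE ij).
rewrite mulr_sumr; apply: eq_bigr => b bE.
set P := upd (upd P0 i a) j b.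
have hP : forall k c, P k = Some c -> c \in edges e.
  by apply: upd_ok => //; apply: upd_ok.
have Pi : P i = Some a by rewrite /P updE (negbTE ij) updE eqxx.
have Pj : P j = Some b by rewrite /P updE eqxx.
rewrite (eq_bigr (fun r : {ffun 'I_s -> {set V}} => if [forall k, opt_ok (P k) (r k)] then G a b else 0)); last first.
  move=> r _; case: ifP => // c.
  by rewrite (cond_val Pi c) (cond_val Pj c).
rewrite sum_fix // /P !upd_None None_P0 mulr_natl //.
Qed.

Lemma sum3 i j l (G : {set V} -> {set V} -> {set V} -> R) :
  i != j -> i != l -> j != l ->
  \sum_(r in Om) G (r i) (r j) (r l) =
  (m ^ #|[set: 'I_s] :\ i :\ j :\ l|)%:R *
    \sum_(a in edges e) \sum_(b in edges e) \sum_(c in edges e) G a b c.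
Proof.
move=> ij il jl.
transitivity (\sum_(r in Om) (if [forall k, opt_ok (P0 k) (r k)] then G (r i) (r j) (r l) else 0)).
  by apply: eq_bigr => r _; rewrite P0_forall.
rewrite (@sum_step P0 i (fun r => G (r i) (r j) (r l))) // mulr_sumr; apply: eq_bigr => a aE.
rewrite (@sum_step (upd P0 i a) j (fun r => G (r i) (r j) (r l))); last by rewrite updE eq_sym (negbTE ij).
rewrite mulr_sumr; apply: eq_bigr => b bE.
rewrite (@sum_step (upd (upd P0 i a) j b) l (fun r => G (r i) (r j) (r l))); last by rewrite !updE eq_sym (negbTE jl) eq_sym (negbTE il).
rewrite mulr_sumr; apply: eq_bigr => c cE.
set P := upd (upd (upd P0 i a) j b) l c.
have hP : forall k x, P k = Some x -> x \in edges e.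
  by apply: upd_ok => //; apply: upd_ok => //; apply: upd_ok.
have Pi : P i = Some a by rewrite /P !updE (negbTE il) (negbTE ij) eqxx.
have Pj : P j = Some b by rewrite /P !updE (negbTE jl) eqxx.
have Pl : P l = Some c by rewrite /P updE eqxx.
rewrite (eq_bigr (fun r : {ffun 'I_s -> {set V}} => if [forall k, opt_ok (P k) (r k)] then G a b c else 0)); last first.
  move=> r _; case: ifP => // h.
  by rewrite (cond_val Pi h) (cond_val Pj h) (cond_val Pl h).
rewrite sum_fix // /P !upd_None None_P0 mulr_natl //.
Qed.

Lemma sum4 i j l n (G : {set V} -> {set V} -> {set V} -> {set V} -> R) :
  i != j -> i != l -> i != n -> j != l -> j != n -> l != n ->
  \sum_(r in Om) G (r i) (r j) (r l) (r n) =
  (m ^ #|[set: 'I_s] :\ i :\ j :\ l :\ n|)%:R *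
    \sum_(a in edges e) \sum_(b in edges e) \sum_(c in edges e) \sum_(d in edges e) G a b c d.
Proof.
move=> ij il in_ jl jn ln.
transitivity (\sum_(r in Om) (if [forall k, opt_ok (P0 k) (r k)] then G (r i) (r j) (r l) (r n) else 0)).
  by apply: eq_bigr => r _; rewrite P0_forall.
rewrite (@sum_step P0 i (fun r => G (r i) (r j) (r l) (r n))) // mulr_sumr; apply: eq_bigr => a aE.
rewrite (@sum_step (upd P0 i a) j (fun r => G (r i) (r j) (r l) (r n))); last by rewrite updE eq_sym (negbTE ij).
rewrite mulr_sumr; apply: eq_bigr => b bE.
rewrite (@sum_step (upd (upd P0 i a) j b) l (fun r => G (r i) (r j) (r l) (r n))); last by rewrite !updE eq_sym (negbTE jl) eq_sym (negbTE il).
rewrite mulr_sumr; apply: eq_bigr => c cE.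
rewrite (@sum_step (upd (upd (upd P0 i a) j b) l c) n (fun r => G (r i) (r j) (r l) (r n))); last by rewrite !updE eq_sym (negbTE ln) eq_sym (negbTE jn) eq_sym (negbTE in_).
rewrite mulr_sumr; apply: eq_bigr => d dE.
set P := upd (upd (upd (upd P0 i a) j b) l c) n d.
have hP : forall k x, P k = Some x -> x \in edges e.
  by apply: upd_ok => //; apply: upd_ok => //; apply: upd_ok => //; apply: upd_ok.
have Pi : P i = Some a by rewrite /P !updE (negbTE in_) (negbTE il) (negbTE ij) eqxx.
have Pj : P j = Some b by rewrite /P !updE (negbTE jn) (negbTE jl) eqxx.
have Pl : P l = Some c by rewrite /P !updE (negbTE ln) eqxx.
have Pn : P n = Some d by rewrite /P updE eqxx.
rewrite (eq_bigr (fun r : {ffun 'I_s -> {set V}} => if [forall k, opt_ok (P k) (r k)] then G a b c d else 0)); last first.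
  move=> r _; case: ifP => // h.
  by rewrite (cond_val Pi h) (cond_val Pj h) (cond_val Pl h) (cond_val Pn h).
rewrite sum_fix // /P !upd_None None_P0 mulr_natl //.
Qed.
End Space.

Lemma cardD1' (T : finType) (A : {set T}) x : x \in A -> (#|A :\ x| + 1)%N = #|A|.
Proof. by move=> xA; rewrite (cardsD1 x A) xA addnC. Qed.

Lemma cardPi s : #|[set p : 'I_s * 'I_s | p.1 < p.2]| = 'C(s, 2).
Proof.
rewrite -sum1dep_card -(pair_big_dep xpredT (fun i j : 'I_s => i < j) (fun _ _ => 1%N)) /=.
rewrite (eq_bigr (fun i : 'I_s => \sum_(j : 'I_s) (i < j : nat))); last first.
  move=> i _; rewrite big_mkcond /=; apply: eq_bigr => j _; by case: (i < j).
rewrite exchange_big /=.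
rewrite (eq_bigr (fun j : 'I_s => nat_of_ord j)); last first.
  move=> j _; rewrite -big_mkcond /= (big_ord_narrow (F := fun=> 1%N) (ltnW (ltn_ord j))).
  by rewrite sum1_card card_ord.
by rewrite -(big_mkord xpredT (fun j => j)) bin2_sum.
Qed.

Section Arith.
Local Open Scope ring_scope.
Lemma eqle (R : numDomainType) (x y : R) : x = y -> x <= y.
Proof. by move->. Qed.

Lemma arith (R : rcfType) (M w g T s K : R) : 0 < M -> 0 < w -> 0 < g -> g < 1 -> 0 <= K -> K <= 2 * w ^+ 2 ->
  0 <= T -> s ^+ 2 <= 4 * T -> 0 <= s -> 256 * M <= g ^+ 3 * w * s ->
  T * K * M ^+ 2 + 16 * s ^+ 3 * w * K * M <= 4 * g ^+ 3 * w ^+ 4 * T ^+ 2.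
Proof.
move=> M0 w0 g0 g1 K0 Kw T0 sT s0 hM.
have g3 : 0 < g ^+ 3 by rewrite exprn_gt0.
have g31 : g ^+ 3 <= 1 by rewrite exprn_ile1 // ltW.
have hM2 : M ^+ 2 <= g ^+ 3 * w ^+ 2 * T.
  have h1 : (256 * M) ^+ 2 <= (g ^+ 3 * w * s) ^+ 2.
    by rewrite !expr2; apply: ler_pM => //; rewrite mulr_ge0 // ltW.
  have h2 : (g ^+ 3 * w * s) ^+ 2 = g ^+ 3 * (g ^+ 3 * w ^+ 2 * s ^+ 2) by ring.
  have h3 : g ^+ 3 * (g ^+ 3 * w ^+ 2 * s ^+ 2) <= g ^+ 3 * w ^+ 2 * s ^+ 2.
    apply: ler_piMl => //; apply: mulr_ge0; last exact: exprn_ge0.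
    by apply: mulr_ge0; [exact: ltW | exact: exprn_ge0 (ltW w0)].
  have h4 : g ^+ 3 * w ^+ 2 * s ^+ 2 <= g ^+ 3 * w ^+ 2 * (4 * T).
    apply: (ler_wpM2l _ sT); apply: mulr_ge0; [exact: ltW | exact: exprn_ge0 (ltW w0)].
  nra.
have t1 : T * K * M ^+ 2 <= 2 * g ^+ 3 * w ^+ 4 * T ^+ 2.
  have : T * K * M ^+ 2 <= T * (2 * w ^+ 2) * M ^+ 2.
    apply: ler_wpM2r; [exact: exprn_ge0 (ltW M0) | exact: (ler_wpM2l T0 Kw)].
  have : T * (2 * w ^+ 2) * M ^+ 2 <= T * (2 * w ^+ 2) * (g ^+ 3 * w ^+ 2 * T).
    apply: (ler_wpM2l _ hM2); apply: mulr_ge0 => //; apply: mulr_ge0 => //; exact: exprn_ge0 (ltW w0).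
  move=> b a; apply: (le_trans a); apply: (le_trans b); apply: eqle; ring.
have t2 : 16 * s ^+ 3 * w * K * M <= 2 * g ^+ 3 * w ^+ 4 * T ^+ 2.
  have a : 16 * s ^+ 3 * w * K * M <= 16 * s ^+ 3 * w * (2 * w ^+ 2) * M.
    apply: ler_wpM2r; first exact: ltW.
    apply: (ler_wpM2l _ Kw); apply: mulr_ge0; [apply: mulr_ge0 => //; exact: exprn_ge0 | exact: ltW].
  have b : 256 * (16 * s ^+ 3 * w * (2 * w ^+ 2) * M) <= 16 * s ^+ 3 * w * (2 * w ^+ 2) * (g ^+ 3 * w * s).
    have -> : 256 * (16 * s ^+ 3 * w * (2 * w ^+ 2) * M) = 16 * s ^+ 3 * w * (2 * w ^+ 2) * (256 * M) by ring.
    apply: (ler_wpM2l _ hM); apply: mulr_ge0; last by apply: mulr_ge0 => //; exact: exprn_ge0 (ltW w0).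
    apply: mulr_ge0; [apply: mulr_ge0 => //; exact: exprn_ge0 | exact: ltW].
  have c : s ^+ 4 <= 16 * T ^+ 2.
    have : (s ^+ 2) ^+ 2 <= (4 * T) ^+ 2.
      rewrite [X in X <= _]expr2 [X in _ <= X]expr2; apply: ler_pM => //; exact: exprn_ge0.
    move=> h; apply: le_trans (le_trans _ h) _; apply: eqle; ring.
  have d : g ^+ 3 * w ^+ 4 * s ^+ 4 <= g ^+ 3 * w ^+ 4 * (16 * T ^+ 2).
    apply: (ler_wpM2l _ c); apply: mulr_ge0; [exact: ltW | exact: exprn_ge0 (ltW w0)].
  nra.
nra.
Qed.

End Arith.

Section Main.
Variables (R : rcfType) (V : finType) (e : rel V) (S : {set {set {set V}}}) (s : nat).
Variables (eirr : irreflexive e) (SW : S \subset wedges e) (S0 : S != set0) (s2 : (2 <= s)%N).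
Local Open Scope ring_scope.

Notation E := (edges e).
Notation m := #|edges e|.
Notation Om := (sample_space e s).
Definition M : R := m%:R.
Definition N : R := (#|Om|)%:R.
Definition Qb (a b : {set V}) : R := (Q S a b)%:R.
Definition K : R := \sum_(a in E) \sum_(b in E) Qb a b.
Definition Pi := [set p : 'I_s * 'I_s | (p.1 < p.2)%N].
Definition T : R := (#|Pi|)%:R.
Definition p0 : R := K / M ^+ 2.

Lemma W0 : (0 < #|wedges e|)%N.
Proof.
have [P PS] := set0Pn _ S0; rewrite card_gt0; apply/set0Pn; exists P.
exact: (subsetP SW).
Qed.

Lemma m0 : (0 < m)%N.
Proof.
have [P PS] := set0Pn _ S0; have [A [B [_ hP]]] := wedgeP (subsetP SW _ PS).
move: PS; rewrite hP => /(Q_E1 SW) AE.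
by rewrite card_gt0; apply/set0Pn; exists A.
Qed.

Lemma M_gt0 : 0 < M. Proof. by rewrite /M ltr0n m0. Qed.
Lemma M_neq0 : M != 0. Proof. by rewrite gt_eqF // M_gt0. Qed.

Lemma N_eq : N = M ^+ s.
Proof. by rewrite /N card_Om natrX. Qed.

Lemma powsplit c k : (c + k)%N = s -> (m ^ c)%:R = N / M ^+ k :> R.
Proof.
move=> h; rewrite N_eq -h exprD natrX mulfK //.
by rewrite expf_neq0 // M_neq0.
Qed.

Lemma sumE_full (F : {set V} -> R) : (forall a, a \notin E -> F a = 0) ->
  \sum_(a in E) F a = \sum_a F a.
Proof.
move=> h; rewrite [RHS](bigID (fun a => a \in E)) /= [X in _ = _ + X]big1 ?addr0 //.
Qed.

Lemma K_eq : K = (2 * #|S|)%:R.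
Proof.
rewrite -(K_card SW) /K sumE_full; last first.
  move=> a aE; apply: big1 => b _; rewrite /Qb; case h: (Q S a b) => //.
  by move/(Q_E1 SW): h; rewrite (negbTE aE).
rewrite natr_sum; apply: eq_bigr => a _; rewrite natr_sum sumE_full //.
move=> b bE; rewrite /Qb; case h: (Q S a b) => //.
by move/(Q_E2 SW): h; rewrite (negbTE bE).
Qed.

Lemma sum2' i j (G : {set V} -> {set V} -> R) : i != j ->
  \sum_(r in Om) G (r i) (r j) = N / M ^+ 2 * \sum_(a in E) \sum_(b in E) G a b.
Proof.
move=> ij; rewrite sum2 //; congr (_ * _); apply: powsplit.
rewrite -addn1 addnA cardD1'; last by rewrite !inE eq_sym ij.
rewrite cardD1'; last by rewrite !inE.
by rewrite cardsT card_ord.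
Qed.

Lemma sum3' i j l (G : {set V} -> {set V} -> {set V} -> R) :
  i != j -> i != l -> j != l ->
  \sum_(r in Om) G (r i) (r j) (r l) =
  N / M ^+ 3 * \sum_(a in E) \sum_(b in E) \sum_(c in E) G a b c.
Proof.
move=> ij il jl; rewrite sum3 //; congr (_ * _); apply: powsplit.
rewrite -addn1 -addn1 !addnA cardD1'; last by rewrite !inE eq_sym jl eq_sym il.
rewrite cardD1'; last by rewrite !inE eq_sym ij.
rewrite cardD1'; last by rewrite !inE.
by rewrite cardsT card_ord.
Qed.

Lemma sum4' i j l n (G : {set V} -> {set V} -> {set V} -> {set V} -> R) :
  i != j -> i != l -> i != n -> j != l -> j != n -> l != n ->
  \sum_(r in Om) G (r i) (r j) (r l) (r n) =
  N / M ^+ 4 * \sum_(a in E) \sum_(b in E) \sum_(c in E) \sum_(d in E) G a b c d.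
Proof.
move=> ij il in_ jl jn ln; rewrite sum4 //; congr (_ * _); apply: powsplit.
rewrite -addn1 -addn1 -addn1 !addnA cardD1'; last by rewrite !inE eq_sym ln eq_sym jn eq_sym in_.
rewrite cardD1'; last by rewrite !inE eq_sym jl eq_sym il.
rewrite cardD1'; last by rewrite !inE eq_sym ij.
rewrite cardD1'; last by rewrite !inE.
by rewrite cardsT card_ord.
Qed.

Definition Xr (r : {ffun 'I_s -> {set V}}) : R := (Xcount S r)%:R.

Lemma X_sum r : Xr r = \sum_(p in Pi) Qb (r p.1) (r p.2).
Proof.
rewrite /Xr /Xcount -sum1dep_card natr_sum big_mkcondr /=.
apply: eq_big => [p|p _]; first by rewrite inE.
by rewrite /Qb /Q; case: ([set _; _] \in S).
Qed.

Lemma Pi_neq p : p \in Pi -> p.1 != p.2.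
Proof. by rewrite inE => h; rewrite neq_ltn h. Qed.

Lemma sumY p : p \in Pi -> \sum_(r in Om) Qb (r p.1) (r p.2) = N * p0.
Proof.
move=> hp; rewrite (sum2' Qb (Pi_neq hp)) -/K /p0.
by rewrite mulrAC -mulrA.
Qed.

Lemma N_gt0 : 0 < N.
Proof. by rewrite N_eq exprn_gt0 // M_gt0. Qed.

Lemma sumX : \sum_(r in Om) Xr r = T * (N * p0).
Proof.
rewrite (eq_bigr _ (fun r _ => X_sum r)) exchange_big /=.
rewrite (eq_bigr (fun _ => N * p0)); last by move=> p hp; apply: sumY.
by rewrite sumr_const /T mulr_natl.
Qed.

Lemma expect_eq : expectX e R S s = T * p0.
Proof.
rewrite /expectX -/N (_ : \sum_(r in Om) _ = \sum_(r in Om) Xr r) //.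
by rewrite sumX mulrCA mulrC mulKf // gt_eqF // N_gt0.
Qed.

Lemma part1 : expectX e R S s = ('C(s, 2))%:R * (2 * (#|S|)%:R / ((#|edges e|)%:R ^+ 2)).
Proof. by rewrite expect_eq /T cardPi /p0 K_eq natrM. Qed.

Definition Z p (r : {ffun 'I_s -> {set V}}) := Qb (r p.1) (r p.2) - p0.

Lemma dev r : Xr r - T * p0 = \sum_(p in Pi) Z p r.
Proof. by rewrite X_sum /Z sumrB sumr_const /T mulr_natl. Qed.

Lemma sq_dev r : (Xr r - T * p0) ^+ 2 = \sum_(p in Pi) \sum_(q in Pi) Z p r * Z q r.
Proof.
rewrite dev expr2 mulr_suml; apply: eq_bigr => p _; by rewrite mulr_sumr.
Qed.

Lemma Qb01 a b : Qb a b * Qb a b = Qb a b.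
Proof. by rewrite /Qb; case: (Q S a b); rewrite ?mulr1 ?mulr0. Qed.

Lemma Qb_ge0 a b : 0 <= Qb a b.
Proof. by rewrite /Qb ler0n. Qed.

Lemma sumZZ p q : p \in Pi -> q \in Pi ->
  \sum_(r in Om) Z p r * Z q r =
  \sum_(r in Om) Qb (r p.1) (r p.2) * Qb (r q.1) (r q.2) - N * p0 ^+ 2.
Proof.
move=> hp hq.
rewrite (eq_bigr (fun r : {ffun 'I_s -> {set V}} => (Qb (r p.1) (r p.2) * Qb (r q.1) (r q.2) -
    p0 * Qb (r p.1) (r p.2)) - p0 * Qb (r q.1) (r q.2) + p0 ^+ 2)); last first.
  by move=> r _; rewrite /Z; ring.
rewrite big_split /= !sumrB -!mulr_sumr (sumY hp) (sumY hq) sumr_const -/N.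
rewrite -mulr_natr -/N.
rewrite /p0; ring.
Qed.

Lemma sumYY_disj i j k l : i != j -> i != k -> i != l -> j != k -> j != l -> k != l ->
  \sum_(r in Om) Qb (r i) (r j) * Qb (r k) (r l) = N * p0 ^+ 2.
Proof.
move=> ij ik il jk jl kl.
rewrite (sum4' (fun a b c d => Qb a b * Qb c d)) //.
have -> : \sum_(a in E) \sum_(b in E) \sum_(c in E) \sum_(d in E) Qb a b * Qb c d = K * K.
  rewrite /K mulr_suml; apply: eq_bigr => a _; rewrite mulr_suml; apply: eq_bigr => b _.
  rewrite mulr_sumr; apply: eq_bigr => c _; by rewrite mulr_sumr.
rewrite /p0; field; exact: M_neq0.
Qed.

Lemma sumYY_eq p : p \in Pi ->
  \sum_(r in Om) Qb (r p.1) (r p.2) * Qb (r p.1) (r p.2) = N * p0.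
Proof. by move=> hp; rewrite (eq_bigr _ (fun r _ => Qb01 _ _)) sumY. Qed.

Definition w : R := Num.sqrt (#|wedges e|)%:R.

Lemma w_sq : w ^+ 2 = (#|wedges e|)%:R.
Proof. by rewrite sqr_sqrtr // ler0n. Qed.

Lemma w_gt0 : 0 < w.
Proof. by rewrite sqrtr_gt0 ltr0n W0. Qed.

Definition dg a := \sum_(b in E) Qb a b.

Lemma dg_ge0 a : 0 <= dg a.
Proof. by apply: sumr_ge0 => b _; apply: Qb_ge0. Qed.

Lemma dg_le a : dg a <= 4 * w.
Proof.
have h : dg a = (deg S a)%:R.
  rewrite /dg /deg natr_sum sumE_full // => b bE; rewrite /Qb.
  case h: (Q S a b) => //; by move/(Q_E2 SW): h; rewrite (negbTE bE).
have h2 : dg a * dg a <= 16 * w ^+ 2.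
  rewrite h w_sq -natrM -(natrM _ 16) ler_nat.
  by apply: deg_bound => //; apply: W0.
have := dg_ge0 a; have := w_gt0; nra.
Qed.

Lemma sumYY_tri x y z : x != y -> x != z -> y != z ->
  \sum_(r in Om) Qb (r x) (r y) * Qb (r x) (r z) <= N / M ^+ 3 * (4 * w * K).
Proof.
move=> xy xz yz; rewrite (sum3' (fun a b c => Qb a b * Qb a c)) //.
have NM : 0 <= N / M ^+ 3 by rewrite divr_ge0 ?exprn_ge0 ?ltW ?N_gt0 ?M_gt0.
apply: ler_wpM2l => //.
rewrite /K mulr_sumr; apply: ler_sum => a _.
have -> : \sum_(b in E) \sum_(c in E) Qb a b * Qb a c = dg a * dg a.
  rewrite /dg mulr_suml; apply: eq_bigr => b _; by rewrite mulr_sumr.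
rewrite -/(dg a) mulrC; apply: ler_wpM2r; first exact: dg_ge0.
exact: dg_le.
Qed.

Definition C : R := N / M ^+ 3 * (4 * w * K).
Definition ind (p q : 'I_s * 'I_s) : R :=
  ((p.1 == q.1) + (p.1 == q.2) + (p.2 == q.1) + (p.2 == q.2))%N%:R.

Lemma K_ge0 : 0 <= K.
Proof. by rewrite K_eq ler0n. Qed.
Lemma p0_ge0 : 0 <= p0.
Proof. by rewrite /p0 divr_ge0 ?K_ge0 // exprn_ge0 // ltW // M_gt0. Qed.
Lemma C_ge0 : 0 <= C.
Proof.
apply: mulr_ge0; first by apply: divr_ge0; [exact: ltW N_gt0 | exact: exprn_ge0 (ltW M_gt0)].
apply: mulr_ge0; last exact: K_ge0.
by apply: mulr_ge0 => //; exact: ltW w_gt0.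
Qed.

Lemma Qb_sym a b : Qb a b = Qb b a.
Proof. by rewrite /Qb Q_sym. Qed.

Lemma pq_bound p q : p \in Pi -> q \in Pi ->
  \sum_(r in Om) Z p r * Z q r <= (p == q)%:R * (N * p0) + ind p q * C.
Proof.
move=> hp hq; rewrite sumZZ //.
have Np0 : 0 <= N * p0 by rewrite mulr_ge0 ?p0_ge0 // ltW // N_gt0.
have Np02 : 0 <= N * p0 ^+ 2 by rewrite mulr_ge0 ?exprn_ge0 ?p0_ge0 // ltW // N_gt0.
have indC : 0 <= ind p q * C by rewrite mulr_ge0 ?C_ge0 // ler0n.
case: (eqVneq p q) => [<- | pq].
  rewrite sumYY_eq // mul1r; apply: ler_wpDr.
    by rewrite mulr_ge0 ?C_ge0 // ler0n.
  by rewrite lerBlDr lerDl.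
rewrite mul0r add0r.
move: hp hq pq indC; case: p => i j; case: q => k l; rewrite !inE /= => ij kl pq indC.
have [ov | nov] := boolP [|| i == k, i == l, j == k | j == l].
  have hC : \sum_(r in Om) Qb (r i) (r j) * Qb (r k) (r l) <= C.
    case/or4P: ov => /eqP Eq; subst.
    - apply: sumYY_tri; rewrite ?neq_ltn ?ij ?kl //.
      by rewrite -neq_ltn; apply: contraNneq pq => /val_inj ->.
    - rewrite (eq_bigr (fun r : {ffun 'I_s -> {set V}} => Qb (r l) (r j) * Qb (r l) (r k))); last first.
        by move=> r _; rewrite (Qb_sym (r k)).
      apply: sumYY_tri; rewrite ?neq_ltn ?ij ?kl ?orbT //.
      by rewrite (ltn_trans kl ij) orbT.
    - rewrite (eq_bigr (fun r : {ffun 'I_s -> {set V}} => Qb (r k) (r i) * Qb (r k) (r l))); last first.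
        by move=> r _; rewrite (Qb_sym (r i)).
      apply: sumYY_tri; rewrite ?neq_ltn ?ij ?kl ?orbT //.
      by rewrite (ltn_trans ij kl).
    - rewrite (eq_bigr (fun r : {ffun 'I_s -> {set V}} => Qb (r l) (r i) * Qb (r l) (r k))); last first.
        by move=> r _; rewrite (Qb_sym (r i)) (Qb_sym (r k)).
      apply: sumYY_tri; rewrite ?neq_ltn ?ij ?kl ?orbT //.
      by rewrite -neq_ltn; apply: contraNneq pq => /val_inj ->.
  have ind1 : 1 <= ind (i, j) (k, l).
    rewrite /ind ler1n; move: ov; rewrite /=.
    by case: (i == k); case: (i == l); case: (j == k); case: (j == l).
  apply: le_trans (_ : C <= _).
    by rewrite lerBlDr; apply: ler_wpDr.
  by rewrite -{1}(mul1r C); apply: ler_wpM2r => //; exact: C_ge0.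
have [ik il jk jl] : [/\ i != k, i != l, j != k & j != l].
  by move: nov; case: (i == k); case: (i == l); case: (j == k); case: (j == l).
rewrite (sumYY_disj (i := i) (j := j) (k := k) (l := l)) //;
  try by rewrite neq_ltn ?ij ?kl.
by rewrite subrr.
Qed.

Lemma sum_sub_le (I : finType) (A : {set I}) (f : I -> R) :
  (forall i, 0 <= f i) -> \sum_(i in A) f i <= \sum_i f i.
Proof.
move=> h; rewrite [X in _ <= X](bigID (mem A)) /= lerDl; apply: sumr_ge0 => i _; exact: h.
Qed.

Lemma count1 (x : 'I_s) : \sum_(i : 'I_s) ((x == i)%:R : R) = 1.
Proof.
rewrite (bigD1 x) //= eqxx big1 ?addr0 // => i ix; by rewrite eq_sym (negbTE ix).
Qed.

Lemma countq1 (x : 'I_s) : \sum_(q : 'I_s * 'I_s) ((x == q.1)%:R : R) = s%:R.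
Proof.
rewrite -(pair_bigA _ (fun i (j : 'I_s) => ((x == i)%:R : R))) /=.
rewrite (eq_bigr (fun i => (x == i)%:R * s%:R)); last first.
  by move=> i _; rewrite sumr_const card_ord mulr_natr.
by rewrite -mulr_suml count1 mul1r.
Qed.

Lemma countq2 (x : 'I_s) : \sum_(q : 'I_s * 'I_s) ((x == q.2)%:R : R) = s%:R.
Proof.
rewrite -(pair_bigA _ (fun (i : 'I_s) j => ((x == j)%:R : R))) /=.
rewrite (eq_bigr (fun i => 1)); last by move=> i _; rewrite count1.
by rewrite sumr_const card_ord.
Qed.

Lemma sum_ind : \sum_(p : 'I_s * 'I_s) \sum_(q : 'I_s * 'I_s) ind p q = 4 * s%:R ^+ 3.
Proof.
rewrite (eq_bigr (fun _ => 4 * s%:R)); last first.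
  move=> p _; rewrite /ind (eq_bigr (fun q => ((p.1 == q.1)%:R + (p.1 == q.2)%:R
     + (p.2 == q.1)%:R + (p.2 == q.2)%:R))); last by move=> q _; rewrite !natrD.
  by rewrite !big_split /= !countq1 !countq2; ring.
rewrite sumr_const card_prod card_ord.
by rewrite -[X in X = _]mulr_natr natrM; ring.
Qed.

Lemma var_bound : \sum_(r in Om) (Xr r - T * p0) ^+ 2 <= T * (N * p0) + 4 * s%:R ^+ 3 * C.
Proof.
rewrite (eq_bigr _ (fun r _ => sq_dev r)) exchange_big /=.
rewrite (eq_bigr (fun p => \sum_(q in Pi) \sum_(r in Om) Z p r * Z q r)); last first.
  by move=> p _; rewrite exchange_big.
apply: le_trans (_ : \sum_(p in Pi) \sum_(q in Pi) ((p == q)%:R * (N * p0) + ind p q * C) <= _).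
  apply: ler_sum => p hp; apply: ler_sum => q hq; exact: pq_bound.
rewrite (eq_bigr (fun p => N * p0 + \sum_(q in Pi) ind p q * C)); last first.
  move=> p hp; rewrite big_split /=; congr (_ + _).
  rewrite (bigD1 p) //= eqxx mul1r big1 ?addr0 // => q /andP[_ qp].
  by rewrite eq_sym (negbTE qp) mul0r.
rewrite big_split /= sumr_const -[_ *+ #|Pi|]mulr_natl -/T; apply: lerD => //.
apply: le_trans (_ : \sum_p \sum_(q in Pi) ind p q * C <= _).
  apply: sum_sub_le => p; apply: sumr_ge0 => q _; apply: mulr_ge0; [exact: ler0n | exact: C_ge0].
apply: le_trans (_ : \sum_p \sum_q ind p q * C <= _).
  apply: ler_sum => p _; apply: sum_sub_le => q; apply: mulr_ge0; [exact: ler0n | exact: C_ge0].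
rewrite -sum_ind mulr_suml; apply: ler_sum => p _; by rewrite mulr_suml.
Qed.

Lemma s_sq : (s * s <= 4 * 'C(s, 2))%N.
Proof.
have := mul_bin_left s 1; rewrite bin1 subn1 => h.
have -> : (4 * 'C(s, 2) = 2 * (s.-1 * s))%N by rewrite -h mulnA.
move: s2; case: s => // n; rewrite /= => hn; nia.
Qed.

Lemma part2 (gamma : R) : 0 < gamma -> gamma < 1 ->
  256 * M / (gamma ^+ 3 * w) <= s%:R ->
  1 - gamma <= probX e R (fun r : {ffun 'I_s -> {set V}} =>
         `|(Xcount S r)%:R - expectX e R S s|
           <= gamma * (#|wedges e|)%:R / (#|S|)%:R * expectX e R S s).
Proof.
move=> g0 g1 hs.
rewrite /probX expect_eq -/N.
set tol := gamma * _ / _ * _.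
set mu := T * p0.
have S0' : (0 < #|S|)%N by rewrite card_gt0.
have sS0 : 0 < (#|S|)%:R :> R by rewrite ltr0n.
have K0 : 0 < K by rewrite K_eq ltr0n muln_gt0.
have T0 : 0 < T.
  rewrite /T cardPi ltr0n bin_gt0; exact: s2.
have tol_eq : tol = 2 * gamma * w ^+ 2 * T / M ^+ 2.
  rewrite /tol /mu /p0 K_eq natrM -w_sq; field.
  by rewrite M_neq0 gt_eqF.
have tol0 : 0 < tol.
  rewrite tol_eq divr_gt0 ?exprn_gt0 ?M_gt0 // !mulr_gt0 ?exprn_gt0 ?w_gt0 //.
set cond := fun r : {ffun 'I_s -> {set V}} => `|(Xcount S r)%:R - mu| <= tol.
set good := [set r in Om | cond r].
set bad := [set r in Om | ~~ cond r].
have hcard : #|Om| = (#|good| + #|bad|)%N.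
  rewrite -(cardsID [set r | cond r] Om); congr (_ + _)%N; apply: eq_card => r;
  by rewrite !inE // andbC.
have cheb : (#|bad|)%:R * tol ^+ 2 <= \sum_(r in Om) (Xr r - mu) ^+ 2.
  rewrite (bigID cond) /=.
  apply: le_trans (_ : \sum_(r in Om | ~~ cond r) (Xr r - mu) ^+ 2 <= _); last first.
    by rewrite lerDr; apply: sumr_ge0 => r _; apply: sqr_ge0.
  rewrite (_ : (#|bad|)%:R * tol ^+ 2 = \sum_(r in Om | ~~ cond r) tol ^+ 2); last first.
    rewrite mulr_natl -sumr_const; apply: eq_bigl => r; by rewrite !inE.
  apply: ler_sum => r /andP[_]; rewrite /cond -ltNge => h.
  rewrite -[X in _ <= X]ger0_norm ?sqr_ge0 // normrX; rewrite !expr2.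
  by apply: ler_pM; rewrite ?ltW // (le_lt_trans (ltW tol0) h).
have key : T * (N * p0) + 4 * s%:R ^+ 3 * C <= gamma * N * tol ^+ 2.
  have L : T * (N * p0) + 4 * s%:R ^+ 3 * C =
     N / M ^+ 4 * (T * K * M ^+ 2 + 16 * s%:R ^+ 3 * w * K * M).
    rewrite /p0 /C; field; exact: M_neq0.
  have Rr : gamma * N * tol ^+ 2 = N / M ^+ 4 * (4 * gamma ^+ 3 * w ^+ 4 * T ^+ 2).
    rewrite tol_eq; field; exact: M_neq0.
  rewrite L Rr; apply: ler_wpM2l.
    by rewrite divr_ge0 ?exprn_ge0 ?ltW ?N_gt0 ?M_gt0.
  apply: arith => //; first exact: M_gt0; first exact: w_gt0.
  - exact: ltW.
  - rewrite K_eq w_sq natrM; apply: ler_wpM2l => //; rewrite ler_nat; exact: subset_leq_card.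
  - by rewrite /T cardPi -natrX -natrM ler_nat -mulnn s_sq.
  - by move: hs; rewrite ler_pdivrMr ?mulr_gt0 ?exprn_gt0 ?w_gt0 // [s%:R * _]mulrC.
have hbad : (#|bad|)%:R <= gamma * N.
  rewrite -(ler_pM2r (exprn_gt0 2 tol0)).
  by apply: le_trans cheb (le_trans var_bound key).
rewrite ler_pdivlMr ?N_gt0 // /N hcard natrD.
move: hbad; rewrite /N hcard natrD; nra.
Qed.
End Main.

Local Open Scope ring_scope.

Theorem mainTheorem2 (R : rcfType) :
  (forall (V : finType) (e : rel V) (S : {set {set {set V}}}) (s : nat),
     symmetric e -> irreflexive e ->
     S \subset wedges e -> S != set0 -> (2 <= s)%N ->
     expectX e R S s =
       ('C(s, 2))%:R * (2 * (#|S|)%:R / ((#|edges e|)%:R ^+ 2)))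
  /\
  (exists c' : R,
     forall (V : finType) (e : rel V) (S : {set {set {set V}}}) (s : nat)
            (gamma : R),
     symmetric e -> irreflexive e ->
     S \subset wedges e -> S != set0 -> (2 <= s)%N ->
     0 < gamma -> gamma < 1 ->
     (#|edges e| <= #|wedges e|)%N ->
     c' * (#|edges e|)%:R / (gamma ^+ 3 * Num.sqrt (#|wedges e|)%:R) <= s%:R ->
     1 - gamma <=
       probX e R (fun r : {ffun 'I_s -> {set V}} =>
         `|(Xcount S r)%:R - expectX e R S s|
           <= gamma * (#|wedges e|)%:R / (#|S|)%:R * expectX e R S s)).
Proof.
split.
  move=> V e S s _ eirr SW S0 s2; exact: part1.
exists 256 => V e S s gamma _ eirr SW S0 s2 g0 g1 _ hs.
exact: part2.
Qed.
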